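(* Let $A\subseteq\mathbb{N}$ with $\operatorname{BD}(A)=\alpha>0$, and let $(I_n)$ be a sequence of intervals $I_n=[a_n,b_n]\subseteq\mathbb{N}$ with $|I_n|\to\infty$ and $\lim_{n\to\infty}\frac{|A\cap I_n|}{|I_n|}=\alpha$. Then there is $L\subseteq\mathbb{N}$ such that (i) $\limsup_{n\to\infty}\frac{|L\cap I_n|}{|I_n|}\ge\alpha$, and (ii) for every finite $F\subseteq L$, the set $A\cap\bigcap_{x\in F}(A-x)$ is infinite.
   Context: $\mathbb{N}=\{1,2,3,\dots\}$; $[a,b]=\{c\in\mathbb{N}:a\le c\le b\}$; $A-x=\{a-x: a\in A\}$. The (upper) Banach density of $A\subseteq\mathbb{N}$ is $\operatorname{BD}(A)=\lim_{n\to\infty}\sup_{m\in\mathbb{N}}\frac{|A\cap[m,m+n]|}{n}$. *)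

(* Defs.v *)
From Stdlib Require Import Reals Lra Lia Arith List.
Import ListNotations.
Open Scope R_scope.

(* A subset of N = {1,2,3,...} is represented by a boolean predicate
   S : nat -> bool with S 0 = false. *)

Definition cnt (P : nat -> bool) (a b : nat) : nat :=
  length (filter P (seq a (S b - a))).

Definition ilen (a b : nat) : nat := (S b - a)%nat.

Definition rdens (P : nat -> bool) (a b : nat) : R :=
  INR (cnt P a b) / INR (ilen a b).

(* Upper Banach density:
   BD(S) = lim_{n->oo} sup_{m in N} |S ∩ [m,m+n]| / n,
   stated as: the sequence of these suprema converges to alpha. *)
Definition BD_is (P : nat -> bool) (alpha : R) : Prop :=
  exists s : nat -> R,
    (forall n : nat,
        is_lub (fun r => exists m : nat, (1 <= m)%nat /\
                           r = INR (cnt P m (m + n)) / INR n) (s n))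
    /\ Un_cv s alpha.

Definition infinite_set (S : nat -> Prop) : Prop :=
  forall N : nat, exists y : nat, (N < y)%nat /\ S y.

Definition in_shift_inter (A : nat -> bool) (F : list nat) (y : nat) : Prop :=
  A y = true /\ forall x, In x F -> A (y + x)%nat = true.

(* Main.v *)
Require Import Defs.
From Stdlib Require Import Reals Lra Lia Arith List Classical ClassicalEpsilon.
Import ListNotations.
Open Scope bool_scope. Open Scope R_scope.

Fixpoint sumn (f : nat -> nat) (n : nat) : nat :=
  match n with O => O | S n => (sumn f n + f n)%nat end.

Definition b2n (b : bool) : nat := if b then 1%nat else 0%nat.
Definition count (P : nat -> bool) (c l : nat) : nat :=
  sumn (fun i => b2n (P (c + i)%nat)) l.

Lemma cnt_count P a b : cnt P a b = count P a (S b - a).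
Proof.
  unfold cnt. generalize (S b - a)%nat as l. intro l. revert a.
  induction l as [|l IH]; intros c; [reflexivity|].
  rewrite seq_S, filter_app, length_app, IH. unfold count; simpl.
  destruct (P (c + l)%nat); simpl; lia.
Qed.

Lemma sumn_ext f g n : (forall i, (i < n)%nat -> f i = g i) -> sumn f n = sumn g n.
Proof. induction n; intros H; simpl; auto. rewrite IHn by (intros; apply H; lia). rewrite (H n) by lia. reflexivity. Qed.

Lemma sumn_le f g n : (forall i, (i < n)%nat -> (f i <= g i)%nat) -> (sumn f n <= sumn g n)%nat.
Proof. induction n; intros H; simpl; auto. specialize (IHn ltac:(intros; apply H; lia)). specialize (H n ltac:(lia)). lia. Qed.

Lemma sumn_add f g n : sumn (fun i => f i + g i)%nat n = (sumn f n + sumn g n)%nat.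
Proof. induction n; simpl; lia. Qed.

Lemma sumn_const c n : sumn (fun _ => c) n = (n * c)%nat.
Proof. induction n; simpl; lia. Qed.

Lemma sumn_swap (h : nat -> nat -> nat) n m :
  sumn (fun i => sumn (fun x => h i x) m) n = sumn (fun x => sumn (fun i => h i x) n) m.
Proof.
  induction n; simpl.
  - rewrite (sumn_const 0 m). lia.
  - rewrite IHn, <- sumn_add. reflexivity.
Qed.

Lemma count_split P c x l : count P c (x + l) = (count P c x + count P (c + x) l)%nat.
Proof.
  unfold count. induction l; simpl. rewrite Nat.add_0_r; lia.
  rewrite Nat.add_succ_r. simpl. rewrite IHl. replace (c + (x + l))%nat with (c + x + l)%nat by lia. lia.
Qed.

Lemma count_le P c l : (count P c l <= l)%nat.
Proof. unfold count. induction l; simpl; auto. destruct (P (c + l)%nat); simpl; lia. Qed.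

Lemma count_shift P c x l : (count P c l <= count P (c + x) l + x)%nat.
Proof.
  pose proof (count_split P c x l). pose proof (count_split P c l x).
  pose proof (count_le P c x). replace (l + x)%nat with (x + l)%nat in H0 by lia. lia.
Qed.

Lemma count_pos P c l : (0 < count P c l)%nat -> exists i, (i < l)%nat /\ P (c + i)%nat = true.
Proof.
  unfold count. induction l; simpl; intros H. lia.
  destruct (P (c + l)%nat) eqn:E. exists l; split; auto.
  simpl in H. destruct IHl as [i [Hi Hp]]. lia. exists i; split; auto.
Qed.

Lemma sumn_R f g n p r :
  (forall i, (i < n)%nat -> INR (f i) + p * INR (g i) <= r) ->
  INR (sumn f n) + p * INR (sumn g n) <= INR n * r.
Proof.
  induction n; intros H. simpl; lra.
  cbn [sumn]. rewrite !plus_INR, S_INR.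
  specialize (IHn ltac:(intros; apply H; lia)). specialize (H n ltac:(lia)). nra.
Qed.

Lemma sumn_small N l : (sumn (fun i => b2n (i <=? N)) l <= S N)%nat.
Proof.
  assert (forall l, (sumn (fun i => b2n (i <=? N)) l <= Nat.min l (S N))%nat).
  { induction l0; simpl. lia. destruct (Nat.leb_spec l0 N); simpl; lia. }
  specialize (H l). lia.
Qed.

Definition matchl (A : nat -> bool) (l : list bool) (y : nat) : Prop :=
  forall i, (i < length l)%nat -> A (y + i)%nat = nth i l false.
Definition GoodL (A : nat -> bool) (G : nat -> nat -> Prop) (l : list bool) :=
  forall K N, exists y, (N < y)%nat /\ G K y /\ matchl A l y.

Lemma matchl_app A l b y : matchl A l y -> A (y + length l)%nat = b -> matchl A (l ++ [b]) y.
Proof.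
  intros H Hb i Hi. rewrite length_app in Hi; simpl in Hi.
  destruct (Nat.lt_ge_cases i (length l)).
  - rewrite app_nth1 by auto. auto.
  - assert (i = length l) by lia. subst. rewrite app_nth2 by lia. rewrite Nat.sub_diag. auto.
Qed.

Lemma good_step A G (Gmono : forall K K' y, (K <= K')%nat -> G K' y -> G K y) l :
  GoodL A G l -> GoodL A G (l ++ [true]) \/ GoodL A G (l ++ [false]).
Proof.
  intros H. destruct (classic (GoodL A G (l ++ [true]))) as [H1|H1]; [left; auto|right].
  unfold GoodL in H1. apply not_all_ex_not in H1. destruct H1 as [K1 H1].
  apply not_all_ex_not in H1. destruct H1 as [N1 H1].
  intros K N. destruct (H (Nat.max K K1) (Nat.max N N1)) as [y [Hy [HG Hm]]].
  destruct (A (y + length l)%nat) eqn:E.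
  - exfalso. apply H1. exists y. split; [lia|]. split. apply (Gmono _ _ _ (Nat.le_max_r K K1) HG).
    apply matchl_app; auto.
  - exists y. split; [lia|]. split. apply (Gmono _ _ _ (Nat.le_max_l K K1) HG).
    apply matchl_app; auto.
Qed.

Definition ext A G (l : list bool) : list bool :=
  if excluded_middle_informative (GoodL A G (l ++ [true])) then l ++ [true] else l ++ [false].
Fixpoint pre A G (p : nat) : list bool :=
  match p with O => [] | S p => ext A G (pre A G p) end.

Lemma pre_len A G p : length (pre A G p) = p.
Proof. induction p; simpl; auto. unfold ext. destruct excluded_middle_informative; rewrite length_app; simpl; lia. Qed.

Lemma pre_nth A G p i : (i < p)%nat -> nth i (pre A G (S p)) false = nth i (pre A G p) false.
Proof. intros Hi. simpl. unfold ext. pose proof (pre_len A G p).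
  destruct excluded_middle_informative; rewrite app_nth1 by lia; auto. Qed.

Lemma pre_nth' A G p i : (i < p)%nat -> nth i (pre A G p) false = nth i (pre A G (S i)) false.
Proof.
  induction p; intros Hi. lia.
  destruct (Nat.eq_dec i p). subst; auto.
  rewrite pre_nth by lia. apply IHp. lia.
Qed.

Lemma pat_compact (A : nat -> bool) (G : nat -> nat -> Prop)
  (Gmono : forall K K' y, (K <= K')%nat -> G K' y -> G K y)
  (Gunb : forall K N, exists y, (N < y)%nat /\ G K y) :
  exists w : nat -> bool, forall p K N, exists y, (N < y)%nat /\ G K y /\
     forall i, (i < p)%nat -> A (y + i)%nat = w i.
Proof.
  exists (fun i => nth i (pre A G (S i)) false).
  assert (HG : forall p, GoodL A G (pre A G p)).
  { induction p.
    - intros K N. destruct (Gunb K N) as [y [H1 H2]]. exists y; repeat split; auto.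
      intros i Hi; simpl in Hi; lia.
    - simpl. unfold ext. destruct excluded_middle_informative as [H|H]; auto.
      destruct (good_step A G Gmono _ IHp); tauto. }
  intros p K N. destruct (HG p K N) as [y [H1 [H2 H3]]]. exists y; repeat split; auto.
  intros i Hi. rewrite H3 by (rewrite pre_len; auto). apply pre_nth'. auto.
Qed.

Lemma bad_bound (A : nat -> bool) (alpha eta delta : R) (a' b' l c lam : nat)
  (hl : l = (S b' - a')%nat) (hl1 : (1 <= l)%nat) (heta : 0 < eta) (hdel : 0 <= delta)
  (hup : forall y, INR (count A (y + a') l) <= (alpha + delta) * INR l) :
  (delta + eta) * INR (count (fun y => if Rle_dec (INR (count A (y + a') l)) ((alpha - eta) * INR l) then true else false) c lam)
  <= INR lam * (alpha + delta) - INR (count A c lam) + INR b'.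
Proof.
  set (bad := fun y => if Rle_dec (INR (count A (y + a') l)) ((alpha - eta) * INR l) then true else false).
  set (cy := fun i => count A (c + i + a') l).
  assert (F2 : INR (sumn cy lam) + ((delta + eta) * INR l) * INR (count bad c lam)
               <= INR lam * ((alpha + delta) * INR l)).
  { unfold count at 1. apply sumn_R. intros i Hi. unfold cy, bad.
    pose proof (hup (c + i)%nat).
    destruct (Rle_dec (INR (count A (c + i + a') l)) ((alpha - eta) * INR l)); simpl; lra. }
  assert (F1 : (l * count A c lam <= sumn cy lam + l * b')%nat).
  { assert (E : sumn cy lam = sumn (fun x => count A (c + (a' + x)) lam) l).
    { unfold cy, count. rewrite sumn_swap. apply sumn_ext. intros x Hx. apply sumn_ext.
      intros i Hi. f_equal. f_equal. lia. }
    rewrite E, <- !sumn_const, <- sumn_add. apply sumn_le. intros x Hx.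
    pose proof (count_shift A c (a' + x) lam). lia. }
  apply le_INR in F1. rewrite plus_INR, !mult_INR in F1.
  assert (Hl : 1 <= INR l) by (apply (le_INR 1); auto).
  fold bad. nra.
Qed.

Fixpoint anyb (f : nat -> nat -> bool) (K y : nat) : bool :=
  match K with O => false | S K => anyb f K y || f K y end.

Lemma anyb_mono f K K' y : (K <= K')%nat -> anyb f K' y = false -> anyb f K y = false.
Proof. induction 1; auto. simpl. intros H'. apply Bool.orb_false_iff in H'. tauto. Qed.

Lemma anyb_k f K y k : (k < K)%nat -> anyb f K y = false -> f k y = false.
Proof.
  induction K; intros Hk H. lia. simpl in H. apply Bool.orb_false_iff in H.
  destruct (Nat.eq_dec k K). subst; tauto. apply IHK; [lia|tauto].
Qed.

Lemma count_anyb f K c lam :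
  (count (anyb f (S K)) c lam <= count (anyb f K) c lam + count (f K) c lam)%nat.
Proof.
  unfold count. rewrite <- sumn_add. apply sumn_le. intros. simpl.
  destruct (anyb f K (c + i)%nat), (f K (c + i)%nat); simpl; lia.
Qed.

Lemma list_le F x : In x F -> (x <= fold_right plus 0 F)%nat.
Proof. induction F; simpl; intros H. contradiction. destruct H. subst; lia. specialize (IHF H); lia. Qed.

Theorem lemma3p3 (A : nat -> bool) (alpha : R) (a b : nat -> nat)
  (hA0 : A 0%nat = false)
  (hBD : BD_is A alpha) (halpha : 0 < alpha)
  (ha : forall n, (1 <= a n)%nat)
  (hlen : cv_infty (fun n => INR (ilen (a n) (b n))))
  (hdens : Un_cv (fun n => rdens A (a n) (b n)) alpha) :
  exists L : nat -> bool,
    L 0%nat = false /\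
    (forall eps : R, 0 < eps -> forall N : nat,
        exists n : nat, (N <= n)%nat /\ alpha - eps < rdens L (a n) (b n)) /\
    (forall F : list nat, (forall x, In x F -> L x = true) ->
        infinite_set (in_shift_inter A F)).
Proof.
  destruct hBD as [s [hs hscv]].
  assert (hup : forall m n, (1 <= m)%nat -> (1 <= n)%nat -> INR (count A m (S n)) <= s n * INR n).
  { intros m0 n Hm Hn. destruct (hs n) as [Hub _].
    assert (Hr := Hub (INR (cnt A m0 (m0 + n)) / INR n) (ex_intro _ m0 (conj Hm eq_refl))).
    rewrite cnt_count in Hr. replace (S (m0 + n) - m0)%nat with (S n) in Hr by lia.
    assert (0 < INR n) by (apply lt_0_INR; lia).
    apply Rmult_le_compat_r with (r := INR n) in Hr; [|lra].
    unfold Rdiv in Hr. rewrite Rmult_assoc, Rinv_l in Hr by lra. lra. }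
  set (w := fun k => (/2)^k).
  assert (wpos : forall k, 0 < w k) by (intros; apply pow_lt; lra).
  assert (wS : forall k, w (S k) = /2 * w k) by (intros; reflexivity).
  set (eta := fun k => alpha * w k / 16).
  assert (etapos : forall k, 0 < eta k) by (intros; unfold eta; specialize (wpos k); nra).
  assert (hm : forall k, exists m, (k <= m)%nat /\ (2 <= ilen (a m) (b m))%nat /\
        Rabs (s (pred (ilen (a m) (b m))) - alpha) <= eta k * eta k).
  { intros k. destruct (hscv (eta k * eta k)) as [M1 HM1]. { specialize (etapos k); nra. }
    destruct (hlen (INR M1 + 2)) as [M2 HM2].
    exists (Nat.max k M2). split; [lia|].
    specialize (HM2 (Nat.max k M2) ltac:(lia)).
    assert (H3 : (M1 + 2 < ilen (a (Nat.max k M2)) (b (Nat.max k M2)))%nat).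
    { apply INR_lt. rewrite plus_INR. simpl (INR 2). lra. }
    split; [lia|]. left. unfold Rdist in HM1. apply HM1. unfold ge. lia. }
  set (m := fun k => proj1_sig (constructive_indefinite_description _ (hm k))).
  assert (hmP : forall k, (k <= m k)%nat /\ (2 <= ilen (a (m k)) (b (m k)))%nat /\
        Rabs (s (pred (ilen (a (m k)) (b (m k)))) - alpha) <= eta k * eta k).
  { intros k. exact (proj2_sig (constructive_indefinite_description _ (hm k))). }
  clearbody m.
  set (l := fun k => ilen (a (m k)) (b (m k))).
  set (badb := fun k y => if Rle_dec (INR (count A (y + a (m k)) (l k))) ((alpha - eta k) * INR (l k)) then true else false).
  set (lam := fun j => ilen (a j) (b j)).
  assert (hbk : forall k, exists J, forall j, (J <= j)%nat ->
     INR (count (badb k) (a j) (lam j)) <= 2 * eta k * INR (lam j)).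
  { intros k. destruct (hmP k) as [_ [Hl2 Hd]].
    set (delta := Rabs (s (pred (l k)) - alpha)).
    assert (hdel : 0 <= delta) by apply Rabs_pos.
    assert (hup' : forall y, INR (count A (y + a (m k)) (l k)) <= (alpha + delta) * INR (l k)).
    { intros y. assert (E : l k = S (pred (l k))) by (unfold l; lia).
      assert (EI : INR (l k) = INR (pred (l k)) + 1) by (rewrite E at 1; rewrite S_INR; reflexivity).
      rewrite E at 1.
      eapply Rle_trans. apply hup. specialize (ha (m k)); lia. unfold l; lia.
      assert (s (pred (l k)) <= alpha + delta) by (unfold delta; pose proof (Rle_abs (s (pred (l k)) - alpha)); lra).
      rewrite EI. pose proof (pos_INR (pred (l k))). nra. }
    pose proof (fun j => bad_bound A alpha (eta k) delta (a (m k)) (b (m k)) (l k) (a j) (lam j) eq_refl ltac:(unfold l; lia) (etapos k) hdel hup') as HB.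
    destruct (hdens (eta k * eta k / 2)) as [J1 HJ1]. { specialize (etapos k); nra. }
    destruct (hlen (2 * INR (b (m k)) / (eta k * eta k) + 1)) as [J2 HJ2].
    exists (Nat.max J1 J2). intros j Hj.
    specialize (HJ1 j ltac:(unfold ge; lia)). specialize (HJ2 j ltac:(lia)).
    specialize (HB j).
    change (INR (count (badb k) (a j) (lam j)) <= 2 * eta k * INR (lam j)).
    change ((delta + eta k) * INR (count (badb k) (a j) (lam j)) <=
      INR (lam j) * (alpha + delta) - INR (count A (a j) (lam j)) + INR (b (m k))) in HB.
    unfold Rdist, rdens in HJ1. rewrite cnt_count in HJ1.
    change (INR (count A (a j) (S (b j) - a j))) with (INR (count A (a j) (lam j))) in HJ1.
    change (INR (ilen (a j) (b j))) with (INR (lam j)) in HJ1, HJ2.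
    assert (Hdd : delta <= eta k * eta k) by exact Hd.
    pose proof (etapos k) as He.
    set (L := INR (lam j)) in *. set (C := INR (count A (a j) (lam j))) in *.
    set (B := INR (count (badb k) (a j) (lam j))) in *. set (bb := INR (b (m k))) in *.
    set (e := eta k) in *.
    assert (HB0 : 0 <= B) by apply pos_INR.
    assert (Hbb : 0 <= bb) by apply pos_INR.
    assert (HL : 0 < L). { assert (0 <= 2 * bb / (e * e)). { apply Rmult_le_pos; [lra|]. apply Rlt_le, Rinv_0_lt_compat; nra. } lra. }
    assert (HC : (alpha - e * e / 2) * L < C).
    { apply Rabs_def2 in HJ1. destruct HJ1 as [_ HJ1].
      assert (C / L * L = C) by (field; lra). nra. }
    assert (Hb2 : 2 * bb < e * e * L).
    { assert (2 * bb / (e * e) * (e * e) = 2 * bb) by (field; lra). nra. }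
    assert (e * B <= 2 * e * e * L) by nra.
    nra. }
  assert (hbK : forall K, exists J, forall j, (J <= j)%nat ->
     INR (count (anyb badb K) (a j) (lam j)) <= alpha / 4 * (1 - w K) * INR (lam j)).
  { induction K.
    - exists 0%nat. intros j _.
      assert (E : count (anyb badb 0) (a j) (lam j) = 0%nat).
      { unfold count. rewrite (sumn_ext _ (fun _ => 0%nat)) by (intros; reflexivity). rewrite sumn_const. lia. }
      rewrite E. unfold w. simpl. lra.
    - destruct IHK as [J1 H1]. destruct (hbk K) as [J2 H2]. exists (Nat.max J1 J2). intros j Hj.
      specialize (H1 j ltac:(lia)). specialize (H2 j ltac:(lia)).
      pose proof (count_anyb badb K (a j) (lam j)) as Hc. apply le_INR in Hc. rewrite plus_INR in Hc.
      rewrite wS. unfold eta in H2. lra. }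
  assert (hunb : forall K N, exists y, (N < y)%nat /\ (A y = true /\ anyb badb K y = false)).
  { intros K N. destruct (hbK K) as [J1 H1].
    destruct (hdens (alpha/2)) as [J2 H2]. lra.
    destruct (hlen (4 * (INR N + 1) / alpha)) as [J3 H3].
    set (j := Nat.max J1 (Nat.max J2 J3)).
    specialize (H1 j ltac:(lia)). specialize (H2 j ltac:(unfold ge; lia)). specialize (H3 j ltac:(lia)).
    set (P := fun y => A y && negb (y <=? N) && negb (anyb badb K y)).
    assert (Hc : (count A (a j) (lam j) <= count P (a j) (lam j) + S N + count (anyb badb K) (a j) (lam j))%nat).
    { assert (Hs : (count (fun y => y <=? N) (a j) (lam j) <= S N)%nat).
      { eapply Nat.le_trans; [|apply (sumn_small N (lam j))]. unfold count. apply sumn_le. intros i _.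
        destruct (Nat.leb_spec (a j + i) N), (Nat.leb_spec i N); simpl; lia. }
      enough (count A (a j) (lam j) <= count P (a j) (lam j) + count (fun y => y <=? N) (a j) (lam j) + count (anyb badb K) (a j) (lam j))%nat by lia.
      unfold count. rewrite <- !sumn_add. apply sumn_le. intros i _. unfold P.
      destruct (A (a j + i)%nat), (a j + i <=? N)%nat, (anyb badb K (a j + i)%nat); simpl; lia. }
    apply le_INR in Hc. rewrite !plus_INR in Hc. rewrite S_INR in Hc.
    unfold Rdist, rdens in H2. rewrite cnt_count in H2.
    change (INR (count A (a j) (S (b j) - a j))) with (INR (count A (a j) (lam j))) in H2.
    change (INR (ilen (a j) (b j))) with (INR (lam j)) in H2, H3.
    pose proof (wpos K) as HwK.
    set (L := INR (lam j)) in *. set (C := INR (count A (a j) (lam j))) in *.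
    set (Pn := INR (count P (a j) (lam j))) in *.
    set (BK := INR (count (anyb badb K) (a j) (lam j))) in *.
    assert (HN : 0 <= INR N) by apply pos_INR.
    assert (HL : 0 < L). { assert (0 <= 4 * (INR N + 1) / alpha). { apply Rmult_le_pos; [lra|]. apply Rlt_le, Rinv_0_lt_compat; lra. } lra. }
    assert (HC : alpha / 2 * L < C).
    { apply Rabs_def2 in H2. destruct H2 as [_ H2].
      assert (C / L * L = C) by (field; lra). nra. }
    assert (HN2 : 4 * (INR N + 1) < alpha * L).
    { assert (4 * (INR N + 1) / alpha * alpha = 4 * (INR N + 1)) by (field; lra). nra. }
    assert (HP : 0 < Pn) by nra.
    assert (HPn : (0 < count P (a j) (lam j))%nat) by (apply INR_lt; simpl; exact HP).
    destruct (count_pos _ _ _ HPn) as [i [Hi HPi]].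
    unfold P in HPi. apply andb_prop in HPi. destruct HPi as [HPi HPi3].
    apply andb_prop in HPi. destruct HPi as [HPi1 HPi2].
    exists (a j + i)%nat. apply Bool.negb_true_iff in HPi2, HPi3. apply Nat.leb_gt in HPi2.
    repeat split; auto. }
  assert (Gmono : forall K K' y, (K <= K')%nat -> (A y = true /\ anyb badb K' y = false) -> (A y = true /\ anyb badb K y = false)).
  { intros K K' y HK [H1 H2]. split; auto. eapply anyb_mono; eauto. }
  destruct (pat_compact A (fun K y => A y = true /\ anyb badb K y = false) Gmono hunb) as [om Hom].
  exists (fun x => (0 <? x)%nat && om x).
  split; [reflexivity|]. split.
  - intros eps Heps N.
    destruct (pow_lt_1_zero (/2) ltac:(rewrite Rabs_pos_eq; lra) (16 * eps / alpha)) as [k0 Hk0].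
    { apply Rmult_lt_0_compat; [lra|]. apply Rinv_0_lt_compat; lra. }
    set (k := Nat.max N k0). exists (m k). split. { destruct (hmP k); lia. }
    destruct (Hom (S (b (m k))) (S k) 0%nat) as [y [_ [[HAy Hany] Hmatch]]].
    pose proof (anyb_k badb (S k) y k ltac:(lia) Hany) as Hbad.
    revert Hbad. unfold badb. destruct (Rle_dec _ _) as [_|Hn]; [discriminate|]. intros _.
    apply Rnot_le_lt in Hn.
    unfold rdens. rewrite cnt_count.
    replace (count (fun x => (0 <? x)%nat && om x) (a (m k)) (S (b (m k)) - a (m k)))
      with (count A (y + a (m k)) (l k)).
    2:{ unfold count. apply sumn_ext. intros i Hi.
        rewrite <- Hmatch by (unfold l, ilen in Hi; lia).
        replace (0 <? a (m k) + i)%nat with true by (symmetry; apply Nat.ltb_lt; specialize (ha (m k)); lia).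
        simpl. f_equal. f_equal. lia. }
    specialize (Hk0 k ltac:(unfold ge, k; lia)). rewrite Rabs_pos_eq in Hk0 by (apply pow_le; lra).
    assert (Hek : eta k < eps).
    { unfold eta, w. assert ((/2)^k * alpha < 16 * eps / alpha * alpha) by (apply Rmult_lt_compat_r; lra).
      assert (16 * eps / alpha * alpha = 16 * eps) by (field; lra). lra. }
    destruct (hmP k) as [_ [Hl2 _]].
    change (ilen (a (m k)) (b (m k))) with (l k).
    assert (HL : 0 < INR (l k)) by (apply lt_0_INR; unfold l; lia).
    set (C := INR (count A (y + a (m k)) (l k))) in *.
    apply Rlt_le_trans with (C / INR (l k)); [|lra].
    apply (Rmult_lt_reg_r (INR (l k))); auto.
    assert (C / INR (l k) * INR (l k) = C) by (field; lra). nra.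
  - intros F HF N.
    destruct (Hom (S (fold_right plus 0%nat F)) 0%nat N) as [y [Hy [[HAy _] Hmatch]]].
    exists y. split; auto. split; auto. intros x Hx.
    pose proof (HF x Hx) as HL. apply andb_prop in HL. destruct HL as [_ HL].
    rewrite Hmatch. auto. pose proof (list_le F x Hx). lia.
Qed.
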